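(* Let $\Bbbk$ be a field of characteristic zero, let $n=2m$ be an even integer and $S=\Bbbk[x_1,\ldots,x_n]$. (1) For $d \geq 5$ and $n\geq 4$, let $I = (x_1^d,\dots, x_n^d, x_1^3x_2^{d-3})$. (2) For $d = 4$ and $n\geq 4$, let $I = (x_1^d,\ldots, x_n^d,x_1 x_2 x_3 x_4)$. (3) For $d = 3$ and $n\geq 6$, let $I = (x_1^d,\ldots, x_n^d,x_1 x_2 x_3)$. Then in all cases, $S/I$ fails the WLP in degree $m(d-1) -1$.
   Context: For a monomial ideal $I$, $A=S/I$ fails the WLP in degree $i$ if the multiplication map $\times(x_1+\cdots+x_n): A_i\to A_{i+1}$ is neither injective nor surjective. *)

(* Defs.v *)
From HB Require Import structures.
From mathcomp Require Import all_boot all_algebra.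
From mathcomp Require Import mpoly.
Set Implicit Arguments. Unset Strict Implicit. Unset Printing Implicit Defensive.
Import GRing.Theory.
Local Open Scope ring_scope.

(* The variable x_{i+1} of S = K[x_1,...,x_n] (0-based index i; 0 if i >= n,
   which never happens under the hypotheses of the theorem). *)
Definition var (K : fieldType) (n : nat) (i : nat) : {mpoly K[n]} :=
  if insub i is Some j then 'X_j else 0.

Definition in_ideal (K : fieldType) (n : nat) (gens : seq {mpoly K[n]})
  (f : {mpoly K[n]}) : Prop :=
  exists hs : seq {mpoly K[n]}, size hs = size gens /\
    f = \sum_(k < size gens) hs`_k * gens`_k.

Definition lform (K : fieldType) (n : nat) : {mpoly K[n]} := \sum_(i < n) 'X_i.

(* A = S/I with A_i = S_i / I_i.  The multiplication map x l : A_i -> A_{i+1}. *)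
Definition wlp_injective (K : fieldType) (n : nat) (gens : seq {mpoly K[n]})
  (i : nat) : Prop :=
  forall f : {mpoly K[n]}, f \is i.-homog ->
    in_ideal gens (lform K n * f) -> in_ideal gens f.

Definition wlp_surjective (K : fieldType) (n : nat) (gens : seq {mpoly K[n]})
  (i : nat) : Prop :=
  forall g : {mpoly K[n]}, g \is i.+1.-homog ->
    exists f : {mpoly K[n]}, f \is i.-homog /\
      in_ideal gens (g - lform K n * f).

Definition fails_WLP_in_degree (K : fieldType) (n : nat)
  (gens : seq {mpoly K[n]}) (i : nat) : Prop :=
  ~ wlp_injective gens i /\ ~ wlp_surjective gens i.

Definition powers_plus (K : fieldType) (n d : nat) (extra : {mpoly K[n]})
  : seq {mpoly K[n]} :=
  [seq (var K n i) ^+ d | i <- iota 0 n] ++ [:: extra].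

(* Main.v *)
Require Import Defs.
From HB Require Import structures.
From mathcomp Require Import all_boot all_algebra.
From mathcomp Require Import mpoly.
From mathcomp Require Import ring zify.
Import GRing.Theory.
Set Implicit Arguments. Unset Strict Implicit. Unset Printing Implicit Defensive.
Local Open Scope ring_scope.


Section Infra.
Context (K : fieldType) (n : nat).
Local Notation P := {mpoly K[n]}.
Local Notation var := (var K n).
Implicit Types (gens : seq P) (p q h : P).

Definition um (c : nat) : 'X_{1..n} := [multinom (nat_of_ord i == c : nat) | i < n].
Lemma umE c (i : 'I_n) : um c i = (nat_of_ord i == c). 
Proof. by rewrite mnmE. Qed.

Lemma varE c : (c < n)%N -> var c = 'X_[um c].
Proof.
move=> hc; rewrite /Defs.var; case: insubP => [j _ vj|]; last by rewrite hc.
congr mpolyX; apply/mnmP => i; rewrite mnm1E umE -vj.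
by rewrite eq_sym.
Qed.

Definition Dn (d : nat) (M : 'X_{1..n}) := [forall i, (M i < d)%N].
Definition Dnull (d : nat) (p : P) := forall M, Dn d M -> p@_M = 0.

Lemma Dnull0 d : Dnull d 0.
Proof. by move=> M _; rewrite mcoeff0. Qed.
Lemma DnullD d p q : Dnull d p -> Dnull d q -> Dnull d (p + q).
Proof. by move=> hp hq M hM; rewrite mcoeffD hp // hq // addr0. Qed.
Lemma DnullN d p : Dnull d p -> Dnull d (- p).
Proof. by move=> hp M hM; rewrite mcoeffN hp // oppr0. Qed.
Lemma DnullB d p q : Dnull d p -> Dnull d q -> Dnull d (p - q).
Proof. by move=> hp hq; apply: DnullD => //; apply: DnullN. Qed.
Lemma Dnull_mull d h q : Dnull d q -> Dnull d (h * q).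
Proof.
move=> hq M hM; rewrite mcoeffM big1 // => k /eqP hk.
rewrite hq ?mulr0 //; apply/forallP => i.
have := forallP hM i.
have -> : M i = (k.1 i + k.2 i)%N by rewrite -mnmDE -hk.
apply: leq_ltn_trans; exact: leq_addl.
Qed.
Lemma Dnull_mulr d h q : Dnull d q -> Dnull d (q * h).
Proof. by move=> hq; rewrite mulrC; apply: Dnull_mull. Qed.
Lemma Dnull_sum d (I : Type) (r : seq I) (Pr : pred I) (F : I -> P) :
  (forall i, Pr i -> Dnull d (F i)) -> Dnull d (\sum_(i <- r | Pr i) F i).
Proof.
move=> hF; elim/big_ind: _ => //; [exact: Dnull0 | exact: DnullD].
Qed.
Lemma DnullX d m : ~~ Dn d m -> Dnull d 'X_[m].
Proof.
move=> hm M hM; rewrite mcoeffX; case: eqP => // e; move: hm; by rewrite e hM.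
Qed.
Lemma DnullZ d c p : Dnull d p -> Dnull d (c *: p).
Proof. by move=> hp M hM; rewrite mcoeffZ hp // mulr0. Qed.

Lemma Dnull_var d c : (0 < d)%N -> (c < n)%N -> Dnull d (var c ^+ d).
Proof.
move=> d0 hc; rewrite varE // mpolyXn; apply: DnullX.
apply/forallP => /= h; have := h (Ordinal hc).
by rewrite mulmnE umE eqxx mul1n ltnn.
Qed.

Lemma in_ideal0 gens : in_ideal gens 0.
Proof.
exists (nseq (size gens) 0); rewrite size_nseq; split => //.
by rewrite big1 // => k _; rewrite nth_nseq; case: ifP; rewrite mul0r.
Qed.
Lemma in_idealD gens p q : in_ideal gens p -> in_ideal gens q -> in_ideal gens (p + q).
Proof.
move=> [hp [sp ->]] [hq [sq ->]].
exists (mkseq (fun k => hp`_k + hq`_k) (size gens)); rewrite size_mkseq; split => //.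
rewrite -big_split /=; apply: eq_bigr => k _; rewrite nth_mkseq // mulrDl //.
Qed.
Lemma in_idealM gens h p : in_ideal gens p -> in_ideal gens (h * p).
Proof.
move=> [hp [sp ->]].
exists (mkseq (fun k => h * hp`_k) (size gens)); rewrite size_mkseq; split => //.
rewrite mulr_sumr; apply: eq_bigr => k _; rewrite nth_mkseq // mulrA //.
Qed.
Lemma in_idealN gens p : in_ideal gens p -> in_ideal gens (- p).
Proof. by move=> h; rewrite -mulN1r; apply: in_idealM. Qed.
Lemma in_idealB gens p q : in_ideal gens p -> in_ideal gens q -> in_ideal gens (p - q).
Proof. by move=> hp hq; apply: in_idealD => //; apply: in_idealN. Qed.
Lemma in_idealMn gens p c : in_ideal gens p -> in_ideal gens (p *+ c).
Proof. by move=> h; rewrite -mulr_natl; apply: in_idealM. Qed.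
Lemma in_ideal_sum gens (I : Type) (r : seq I) (Pr : pred I) (F : I -> P) :
  (forall i, Pr i -> in_ideal gens (F i)) -> in_ideal gens (\sum_(i <- r | Pr i) F i).
Proof.
move=> hF; elim/big_ind: _ => //; [exact: in_ideal0 | exact: in_idealD].
Qed.
Lemma in_ideal_mem gens g : g \in gens -> in_ideal gens g.
Proof.
move=> hg; exists (mkseq (fun k => (k == index g gens)%:R) (size gens)).
rewrite size_mkseq; split => //.
have hi : (index g gens < size gens)%N by rewrite index_mem.
rewrite (bigD1 (Ordinal hi)) //= big1 ?addr0.
  by rewrite nth_mkseq // eqxx mul1r nth_index.
move=> k /eqP hk; rewrite nth_mkseq //.
have -> : (nat_of_ord k == index g gens) = false.
  by apply/negP => /eqP e; apply: hk; apply: val_inj.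
by rewrite mul0r.
Qed.

Lemma KL1 gens d p G : in_ideal gens p ->
  (forall g, g \in gens -> Dnull d (g * G)) -> Dnull d (p * G).
Proof.
move=> [hs [hsz ->]] hg; rewrite mulr_suml; apply: Dnull_sum => k _.
rewrite -mulrA; apply: Dnull_mull; apply: hg; exact: mem_nth.
Qed.

Lemma KL2 gens d p (f : {rmorphism P -> P}) : in_ideal gens p ->
  (forall g, g \in gens -> Dnull d (f g)) -> Dnull d (f p).
Proof.
move=> [hs [hsz ->]] hg; rewrite rmorph_sum; apply: Dnull_sum => k _.
rewrite rmorphM; apply: Dnull_mull; apply: hg; exact: mem_nth.
Qed.

Definition zt (Z : pred nat) : n.-tuple P := [tuple (if Z i then 0 else 'X_i) | i < n].
Notation psi Z := (comp_mpoly (zt Z)).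

Lemma var_ord (i : 'I_n) : var i = 'X_i.
Proof.
rewrite /Defs.var; case: insubP => [j _ /val_inj -> //|]; by rewrite ltn_ord.
Qed.

Lemma psi_var (Z : pred nat) c : (c < n)%N -> psi Z (var c) = if Z c then 0 else var c.
Proof.
move=> hc; rewrite /Defs.var; case: insubP => [j _ vj|]; last by rewrite hc.
by rewrite comp_mpolyXU -tnth_nth tnth_mktuple vj.
Qed.

Lemma psi_X (Z : pred nat) m : psi Z 'X_[m] =
  if [forall i : 'I_n, Z i ==> (m i == 0%N)] then 'X_[m] else 0.
Proof.
rewrite comp_mpolyX; case: ifP => [/forallP h | /negbT].
  rewrite mpolyXE_id; apply: eq_bigr => i _; rewrite tnth_mktuple.
  by case: ifP (h i) => //= _ /eqP ->; rewrite !expr0.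
rewrite negb_forall => /existsP [i]; rewrite negb_imply => /andP [zi mi].
rewrite (bigD1 i) //= tnth_mktuple zi expr0n (negbTE mi) mul0r //.
Qed.

Lemma mcoeff_supp p M : p@_M = \sum_(m <- msupp p) p@_m * (m == M)%:R.
Proof.
rewrite {1}(mpolyE p) raddf_sum /=; apply: eq_bigr => m _.
by rewrite mcoeffZ mcoeffX.
Qed.

Lemma psi_coef (Z : pred nat) p (M : 'X_{1..n}) : (forall i : 'I_n, Z i -> M i = 0%N) -> (psi Z p)@_M = p@_M.
Proof.
move=> hM; rewrite [p@_M]mcoeff_supp.
rewrite {1}(mpolyE p) (raddf_sum (comp_mpoly (zt Z))) raddf_sum /=; apply: eq_bigr => m _.
rewrite comp_mpolyZ mcoeffZ psi_X; congr (_ * _).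
case: (eqVneq m M) => [-> | ne].
  have hc : [forall i : 'I_n, Z i ==> (M i == 0%N)].
    by apply/forallP => i; apply/implyP => /hM ->.
  by rewrite hc mcoeffX eqxx.
rewrite (fun_if (mcoeff M)) mcoeffX (negbTE ne); case: ifP => // _; exact: mcoeff0.
Qed.

Definition fp d (x y : P) := \sum_(k < d) x ^+ (d.-1 - k) * (- y) ^+ k.
Lemma fpE d x y : (x + y) * fp d x y = x ^+ d - (- y) ^+ d.
Proof. by rewrite subrXX opprK. Qed.
Lemma fp0 d x : (0 < d)%N -> fp d x 0 = x ^+ d.-1.
Proof.
case: d => // d _; rewrite /fp big_ord_recl /= subn0 expr0 mulr1 big1 ?addr0 //.
by move=> i _; rewrite oppr0 expr0n /= mulr0.
Qed.
Lemma rmorph_fp (f : {rmorphism P -> P}) d x y : f (fp d x y) = fp d (f x) (f y).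
Proof.
rewrite rmorph_sum; apply: eq_bigr => k _; by rewrite rmorphM !rmorphXn rmorphN.
Qed.

Definition PF d b k := \prod_(j < k) fp d (var (b + 2*j)) (var (b + 2*j).+1).
Definition Lb b := \sum_(0 <= i < b) var i.

Lemma lformE : lform K n = Lb n.
Proof.
rewrite /lform /Lb big_mkord; apply: eq_bigr => i _; by rewrite var_ord.
Qed.

Lemma split_pairs (R : nmodType) (F : nat -> R) b k :
  \sum_(0 <= i < b + 2*k) F i = \sum_(0 <= i < b) F i + \sum_(j < k) (F (b + 2*j)%N + F (b + 2*j).+1).
Proof.
elim: k => [|k IH]; first by rewrite muln0 addn0 big_ord0 addr0.
rewrite big_ord_recr /= !addrA -IH.
have -> : (b + 2 * k.+1 = (b + 2*k).+2)%N by lia.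
rewrite big_nat_recr ?big_nat_recr //= ?leq0n //.
Qed.

Lemma pairs_closed (Q : P -> Prop) d b k X :
  Q 0 -> (forall p q, Q p -> Q q -> Q (p + q)) -> (forall h p, Q p -> Q (h * p)) ->
  (forall c, (c < n)%N -> Q (var c ^+ d)) -> n = (b + 2*k)%N ->
  Q (Lb b * X) -> Q (lform K n * (X * PF d b k)).
Proof.
move=> Q0 QD QM Qv hn QX.
have e := split_pairs var b k; rewrite -hn in e.
rewrite lformE /Lb e -/(Lb b) mulrDl.
apply: (QD); first by rewrite mulrA [_ * PF _ _ _]mulrC; apply: (QM).
rewrite mulr_suml; apply: (big_ind Q Q0 QD) => j _.
have hj : ((b + 2 * j).+1 < n)%N by rewrite hn; have := ltn_ord j; lia.
rewrite /PF (bigD1 j) //=.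
set x := var (b + 2 * j); set y := var (b + 2 * j).+1.
set R := \prod_(i < k | i != j) _.
have -> : (x + y) * (X * (fp d x y * R)) = (X * R) * ((x + y) * fp d x y) by ring.
apply: (QM); rewrite fpE exprNn -mulNr; apply: (QD); first by apply: (Qv); lia.
by apply: (QM); apply: (Qv).
Qed.


Lemma homog_eq e e' p : p \is e.-homog -> e = e' -> p \is e'.-homog.
Proof. by move=> h <-. Qed.

Lemma um_U c (hc : (c < n)%N) : um c = (U_(Ordinal hc))%MM.
Proof. by apply/mnmP => i; rewrite umE mnm1E eq_sym. Qed.

Lemma var_homog c : (c < n)%N -> var c \is 1.-homog.
Proof. move=> hc; rewrite varE // dhomogX um_U; exact/eqP/mdeg1. Qed.

Lemma fp_homog d x y : x \is 1.-homog -> y \is 1.-homog -> fp d x y \is d.-1.-homog.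
Proof.
move=> hx hy; have hy' : - y \is 1.-homog by rewrite dhomogN.
apply: rpred_sum => i _.
apply: (homog_eq (dhomogM (dhomogMn _ hx) (dhomogMn _ hy'))).
have := ltn_ord i; lia.
Qed.

Lemma PF_homog d b k : (b + 2 * k <= n)%N -> PF d b k \is (k * d.-1).-homog.
Proof.
elim: k => [|k IH] hk; first by rewrite /PF big_ord0 dhomog1.
have h1 : (b + 2 * k <= n)%N by lia.
have h2 : (b + 2 * k < n)%N by lia.
have h3 : ((b + 2 * k).+1 < n)%N by lia.
rewrite /PF big_ord_recr /=.
apply: (homog_eq (dhomogM (IH h1) (fp_homog d (var_homog h2) (var_homog h3)))).
by rewrite mulSn addnC.
Qed.

Definition Tm d b k : 'X_{1..n} := (\sum_(j < k) um (b + 2 * j) *+ d.-1)%MM.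

Lemma cnt_le1 b k (i : nat) : (\sum_(j < k) (i == b + 2 * j : nat) <= 1)%N.
Proof.
elim: k => [|k IH]; first by rewrite big_ord0.
rewrite big_ord_recr /=; case: eqP => [e|_]; last by rewrite addn0.
rewrite big1 // => j _; apply/eqP; rewrite eqb0; apply/eqP => e'.
have := ltn_ord j; lia.
Qed.

Lemma TmE d b k (i : 'I_n) : Tm d b k i = ((\sum_(j < k) (nat_of_ord i == b + 2 * j : nat)) * d.-1)%N.
Proof.
rewrite /Tm mnm_sumE big_distrl /=; apply: eq_bigr => j _; by rewrite mulmnE umE.
Qed.

Lemma Tm_le d b k (i : 'I_n) : (Tm d b k i <= d.-1)%N.
Proof. rewrite TmE; have := cnt_le1 b k i; case: (\sum_(j < k) _)%N => [|[|]] //= _; lia. Qed.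

Lemma Tm_low d b k (i : 'I_n) : (i < b)%N -> Tm d b k i = 0%N.
Proof. move=> hi; rewrite TmE big1 // => j _; apply/eqP; rewrite eqb0; apply/eqP; lia. Qed.

Lemma Tm_odd d b k (i : 'I_n) : odd (i - b) -> Tm d b k i = 0%N.
Proof.
move=> hi; rewrite TmE big1 // => j _; apply/eqP; rewrite eqb0; apply/eqP => e.
move: hi; rewrite e addKn oddM //.
Qed.

Lemma mdeg_um c : (c < n)%N -> mdeg (um c) = 1%N.
Proof. by move=> hc; rewrite um_U mdeg1. Qed.

Lemma mdeg_Tm d b k : (b + 2 * k <= n)%N -> mdeg (Tm d b k) = (k * d.-1)%N.
Proof.
move=> hk; rewrite /Tm mdeg_sum (eq_bigr (fun _ => d.-1)).
  by rewrite sum_nat_const card_ord.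
move=> j _; rewrite mdegMn mdeg_um ?mul1n //; have := ltn_ord j; lia.
Qed.

Lemma psi_fp (Z : pred nat) d x y : psi Z (fp d x y) = fp d (psi Z x) (psi Z y).
Proof. exact: rmorph_fp. Qed.

Lemma psi_M (Z : pred nat) p q : psi Z (p * q) = psi Z p * psi Z q.
Proof. exact: rmorphM. Qed.

Lemma XsumE k (F : nat -> 'X_{1..n}) :
  'X_[(\sum_(j < k) F j)%MM] = \prod_(j < k) ('X_[F j] : P).
Proof.
elim: k => [|k IH]; first by rewrite !big_ord0 mpolyX0.
by rewrite !big_ord_recr /= mpolyXD IH.
Qed.

Lemma psi_PF (Z : pred nat) d b k : (0 < d)%N -> (b + 2 * k <= n)%N ->
  (forall j, (j < k)%N -> Z (b + 2 * j).+1 /\ ~~ Z (b + 2 * j)) ->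
  psi Z (PF d b k) = 'X_[Tm d b k].
Proof.
move=> d0 hk hZ; rewrite /PF /Tm rmorph_prod (XsumE k (fun j => um (b + 2 * j) *+ d.-1)%MM); apply: eq_bigr => j _.
have [h1 h2] := hZ j (ltn_ord j).
rewrite /= psi_fp !psi_var ?h1 ?(negbTE h2) ?fp0 // -?mpolyXn -?varE //;
  have := ltn_ord j; lia.
Qed.

Lemma Dn_TM d b (k : nat) (Mb : 'X_{1..n}) : (0 < d)%N -> (forall i : 'I_n, (b <= i)%N -> Mb i = 0%N) -> Dn d Mb ->
  Dn d (Tm d b k + Mb).
Proof.
move=> d0 hM hD; apply/forallP => i; rewrite mnmDE.
case: (ltnP i b) => hi.
  by rewrite Tm_low // add0n (forallP hD i).
by rewrite hM // addn0; have := Tm_le d b k i; lia.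
Qed.

Lemma noninj_gen gens d b k s a (Z : pred nat) (Mb : 'X_{1..n}) :
  (0 < d)%N -> n = (b + 2*k)%N ->
  a \is s.-homog ->
  in_ideal gens (Lb b * a) ->
  (forall c, (c < n)%N -> in_ideal gens (var c ^+ d)) ->
  (forall g, g \in gens -> Dnull d (psi Z g)) ->
  (forall j, (j < k)%N -> Z (b + 2 * j).+1 /\ ~~ Z (b + 2 * j)) ->
  (forall i : 'I_n, (b <= i)%N -> Mb i = 0%N) ->
  Dn d Mb ->
  (psi Z a)@_Mb != 0 ->
  ~ wlp_injective gens (s + k * d.-1).
Proof.
move=> d0 hn ha hLa hv hg hZ hMb hDM hc hinj.
have hk : (b + 2 * k <= n)%N by rewrite hn.
have hf : a * PF d b k \is (s + k * d.-1).-homog by apply: dhomogM => //; apply: PF_homog.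
have hl : in_ideal gens (lform K n * (a * PF d b k)).
  apply: (pairs_closed (Q := in_ideal gens)) => //.
  - exact: in_ideal0.
  - by move=> p q; apply: in_idealD.
  - by move=> h p; apply: in_idealM.
have hD : Dnull d (psi Z (a * PF d b k)) := KL2 (hinj _ hf hl) hg.
have := hD _ (Dn_TM k d0 hMb hDM).
rewrite psi_M psi_PF // mcoeffMX => e; by rewrite e eqxx in hc.
Qed.

Lemma Dn_sub d (M : 'X_{1..n}) : (0 < d)%N -> Dn d M -> Dn d ([multinom (d.-1 - M i)%N | i < n] + M)%MM.
Proof.
move=> d0 hD; apply/forallP => i; rewrite mnmDE mnmE.
have := forallP hD i; lia.
Qed.

Lemma mdeg_sub d (M : 'X_{1..n}) : Dn d M -> mdeg [multinom (d.-1 - M i)%N | i < n] = (n * d.-1 - mdeg M)%N.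
Proof.
move=> hD; apply/eqP; rewrite -(eqn_add2r (mdeg M)) subnK.
  rewrite -mdegD mdegE (eq_bigr (fun _ => d.-1)) ?sum_nat_const ?card_ord //.
  move=> i _; rewrite mnmDE mnmE subnK //; have := forallP hD i; case: (d) => //.
have h : (\sum_(i < n) M i <= \sum_(i < n) d.-1)%N.
  by apply: leq_sum => i _; have := forallP hD i; case: (d) => //.
by rewrite sum_nat_const card_ord in h; rewrite mdegE.
Qed.

Definition zp b : pred nat := fun i => (b <= i)%N && odd (i - b).

Lemma nonsurj_gen gens d b k Gb (Mb : 'X_{1..n}) i :
  (0 < d)%N -> n = (b + 2*k)%N ->
  (forall g, g \in gens -> Dnull d (g * (Gb * PF d b k))) ->
  Dnull d (Lb b * Gb) ->
  psi (zp b) Gb = Gb ->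
  (forall i : 'I_n, (b <= i)%N -> Mb i = 0%N) ->
  Dn d Mb ->
  Gb@_Mb != 0 ->
  i.+1 = (n * d.-1 - (mdeg Mb + k * d.-1))%N ->
  ~ wlp_surjective gens i.
Proof.
move=> d0 hn hg hLG hpG hMb hDM hc hi hsurj.
have hk : (b + 2 * k <= n)%N by rewrite hn.
set M := (Tm d b k + Mb)%MM.
have hDM' : Dn d M by apply: Dn_TM.
set W := [multinom (d.-1 - M i)%N | i < n].
have hW : ('X_[W] : P) \is i.+1.-homog.
  rewrite dhomogX; apply/eqP; change (mdeg W = i.+1); by rewrite mdeg_sub // /M mdegD mdeg_Tm // hi addnC.
have [f [hf hI]] := hsurj _ hW.
set G := Gb * PF d b k.
have h1 := KL1 hI hg.
have h2 : Dnull d (lform K n * f * G).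
  rewrite -mulrA mulrCA; apply: Dnull_mull.
  apply: (pairs_closed (Q := Dnull d)) => //.
  - exact: Dnull0.
  - by move=> p q; apply: DnullD.
  - by move=> h p; apply: Dnull_mull.
  - by move=> c hc'; apply: Dnull_var.
have h3 : Dnull d ('X_[W] * G).
  have -> : 'X_[W] * G = ('X_[W] - lform K n * f) * G + lform K n * f * G by ring.
  exact: DnullD.
have := h3 _ (Dn_sub d0 hDM').
rewrite mulrC mcoeffMX -(psi_coef (Z := zp b)); last first.
  move=> j /andP [hj1 hj2]; rewrite /M mnmDE hMb // addn0 Tm_odd //.
rewrite psi_M hpG psi_PF //; last first.
  move=> j hj; rewrite /zp /=; split.
    apply/andP; split; first lia.
    have -> : ((b + 2*j).+1 - b = (2*j).+1)%N by lia.
    by rewrite /= oddM.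
  by rewrite addKn oddM /= andbF.
by rewrite /M mcoeffMX => e; rewrite e eqxx in hc.
Qed.

End Infra.


Section Common.
Context (K : fieldType) (n : nat).
Local Notation P := {mpoly K[n]}.
Local Notation var := (var K n).
Local Notation psi Z := (comp_mpoly (zt K n Z)).
Implicit Types (gens : seq P) (p q h e : P).

Lemma pp_var d e c : (c < n)%N -> in_ideal (powers_plus d e) (var c ^+ d).
Proof.
move=> hc; apply: in_ideal_mem; rewrite mem_cat; apply/orP; left.
by apply/mapP; exists c; rewrite // mem_iota.
Qed.

Lemma pp_extra d e : in_ideal (powers_plus d e) e.
Proof. by apply: in_ideal_mem; rewrite mem_cat mem_seq1 eqxx orbT. Qed.

Lemma pp_gens d e (Q : P -> Prop) : (forall c, (c < n)%N -> Q (var c ^+ d)) -> Q e ->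
  forall g, g \in powers_plus d e -> Q g.
Proof.
move=> hv he g; rewrite mem_cat mem_seq1 => /orP [/mapP [c] | /eqP -> //].
by rewrite mem_iota add0n => /andP [_ hc] ->; apply: hv.
Qed.

Lemma Dnull_psi_var (Z : pred nat) d c : (0 < d)%N -> (c < n)%N -> Dnull d (psi Z (var c ^+ d)).
Proof.
move=> d0 hc; rewrite rmorphXn /= psi_var //; case: ifP => _.
  by rewrite expr0n; case: d d0 => // d _; exact: Dnull0.
exact: Dnull_var.
Qed.

Lemma split_pow (x : P) a c : (c <= a)%N -> x ^+ a = x ^+ (a - c) * x ^+ c.
Proof. by move=> h; rewrite -exprD subnK. Qed.

Lemma Q_mono2 (Q : P -> Prop) d i j a b :
  (forall h p, Q p -> Q (h * p)) -> (forall c, (c < n)%N -> Q (var c ^+ d)) ->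
  (i < n)%N -> (j < n)%N -> (d <= a)%N || (d <= b)%N -> Q (var i ^+ a * var j ^+ b).
Proof.
move=> QM Qv hi hj /orP [h|h].
  by rewrite (split_pow _ h) mulrAC; apply: QM; apply: Qv.
by rewrite (split_pow _ h) mulrA; apply: QM; apply: Qv.
Qed.

Lemma Lb2 : Lb K n 2 = var 0 + var 1.
Proof. by rewrite /Lb !big_nat_recr //= big_geq // add0r. Qed.
Lemma Lb4 : Lb K n 4 = var 0 + var 1 + var 2 + var 3.
Proof. by rewrite /Lb !big_nat_recr //= big_geq // add0r. Qed.
Lemma Lb6 : Lb K n 6 = var 0 + var 1 + var 2 + var 3 + var 4 + var 5.
Proof. by rewrite /Lb !big_nat_recr //= big_geq // add0r. Qed.

Lemma mcoeff_X2 i j a b a' b' : (i < n)%N -> (j < n)%N -> i != j ->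
  ('X_[um n i *+ a + um n j *+ b] : P)@_(um n i *+ a' + um n j *+ b') = ((a == a') && (b == b'))%:R.
Proof.
move=> hi hj hij; rewrite mcoeffX; congr ((nat_of_bool _)%:R).
case: eqP => [e|ne]; last first.
  by case: eqP => [ea|]; case: eqP => [eb|] //=; rewrite ea eb in ne.
apply/esym/andP; split; apply/eqP.
  have := congr1 (fun m : 'X_{1..n} => m (Ordinal hi)) e; rewrite /= !mnmDE !mulmnE !umE /= eqxx (negbTE hij).
  by rewrite !mul1n !mul0n !addn0.
have := congr1 (fun m : 'X_{1..n} => m (Ordinal hj)) e; rewrite /= !mnmDE !mulmnE !umE /= eqxx eq_sym (negbTE hij).
by rewrite !mul1n !mul0n !add0n.
Qed.


Lemma psi_D (Z : pred nat) p q : psi Z (p + q) = psi Z p + psi Z q.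
Proof. exact: rmorphD. Qed.
Lemma psi_B (Z : pred nat) p q : psi Z (p - q) = psi Z p - psi Z q.
Proof. exact: rmorphB. Qed.
Lemma psi_Xn (Z : pred nat) p k : psi Z (p ^+ k) = psi Z p ^+ k.
Proof. exact: rmorphXn. Qed.
Lemma psi_N (Z : pred nat) p : psi Z (- p) = - psi Z p.
Proof. exact: rmorphN. Qed.

Lemma zp_pair b j : zp b (b + 2 * j).+1 /\ ~~ zp b (b + 2 * j).
Proof.
rewrite /zp; split; last by rewrite addKn oddM andbF.
apply/andP; split; first lia.
have -> : ((b + 2 * j).+1 - b = (2 * j).+1)%N by lia.
by rewrite /= oddM.
Qed.

Lemma mcoeff_signX k m M : (((-1) ^+ k : P) * 'X_[m])@_M = (-1) ^+ k * (m == M)%:R.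
Proof.
rewrite -signr_odd -[(-1) ^+ k]signr_odd; case: (odd k); rewrite ?expr0 ?expr1 ?mul1r ?mulN1r ?mcoeffN mcoeffX //.
Qed.

Section Case1.
Context (d : nat) (d5 : (5 <= d)%N).
Local Notation ex1 := (var 0 ^+ 3 * var 1 ^+ (d - 3)).
Local Notation gens1 := (powers_plus d ex1).
Local Notation N := (2 * d - 3)%N.

Lemma c1_A : (3 < n)%N -> in_ideal gens1 ((var 0 + var 1) ^+ N).
Proof.
move=> hn.
have QM : forall h p, in_ideal gens1 p -> in_ideal gens1 (h * p) by move=> h p; apply: in_idealM.
have Qv : forall c, (c < n)%N -> in_ideal gens1 (var c ^+ d) by move=> c hc; apply: pp_var.
rewrite exprDn; apply: in_ideal_sum => i _; apply: in_idealMn.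
have := ltn_ord i => hi.
case: (boolP ((d <= N - i)%N || (d <= i)%N)) => h.
  by apply: (Q_mono2 (Q := in_ideal gens1) (d := d) QM Qv) => //; lia.
have -> : var 0 ^+ (N - i) * var 1 ^+ i =
    (var 0 ^+ (N - i - 3) * var 1 ^+ (i - (d - 3))) * ex1.
  rewrite (split_pow (var 0) (_ : 3 <= N - i)%N); last lia.
  rewrite (split_pow (var 1) (_ : d - 3 <= i)%N); last lia.
  ring.
apply: in_idealM; exact: pp_extra.
Qed.

Lemma c1_B : (3 < n)%N -> in_ideal gens1 ((var 2 - var 3) * (var 2 + var 3) ^+ N).
Proof.
move=> hn.
have QM : forall h p, in_ideal gens1 p -> in_ideal gens1 (h * p) by move=> h p; apply: in_idealM.
have Qv : forall c, (c < n)%N -> in_ideal gens1 (var c ^+ d) by move=> c hc; apply: pp_var.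
set T1 := fun i : 'I_N.+1 => (var 2 ^+ (N.+1 - i) * var 3 ^+ i) *+ 'C(N, i).
set T2 := fun i : 'I_N.+1 => (var 2 ^+ (N - i) * var 3 ^+ i.+1) *+ 'C(N, i).
have -> : (var 2 - var 3) * (var 2 + var 3) ^+ N = \sum_i T1 i - \sum_i T2 i.
  rewrite exprDn mulrBl !mulr_sumr; congr (_ - _); apply: eq_bigr => i _.
    rewrite /T1 mulrnAr mulrA -exprS subSn //; have := ltn_ord i; lia.
  by rewrite /T2 mulrnAr mulrCA -exprS.
have h1 : (d.-1 < N.+1)%N by lia.
have h2 : (d - 2 < N.+1)%N by lia.
rewrite [\sum_i T1 i](bigD1 (Ordinal h1)) // [\sum_i T2 i](bigD1 (Ordinal h2)) //=.
have -> : T1 (Ordinal h1) = T2 (Ordinal h2).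
  rewrite /T1 /T2 /=.
  have -> : (N.+1 - d.-1 = d.-1)%N by lia.
  have -> : (N - (d - 2) = d.-1)%N by lia.
  have -> : (d - 2).+1 = d.-1 by lia.
  have -> : 'C(N, d - 2) = 'C(N, d.-1).
    by rewrite -bin_sub; [congr 'C(_, _); lia | lia].
  by [].
rewrite opprD addrACA subrr add0r; apply: in_idealB.
  apply: in_ideal_sum => i /= hi; apply: in_idealMn.
  have hi' : nat_of_ord i != d.-1 by apply: contra hi => /eqP e; apply/eqP/val_inj.
  apply: (Q_mono2 (Q := in_ideal gens1) (d := d) QM Qv) => //; move: hi' => /eqP; have := ltn_ord i; lia.
apply: in_ideal_sum => i /= hi; apply: in_idealMn.
have hi' : nat_of_ord i != (d - 2)%N by apply: contra hi => /eqP e; apply/eqP/val_inj.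
apply: (Q_mono2 (Q := in_ideal gens1) (d := d) QM Qv) => //; move: hi' => /eqP; have := ltn_ord i; lia.
Qed.


Lemma c1_nonsurj m : n = (2 * m)%N -> (2 <= m)%N -> ~ wlp_surjective gens1 (m * (d - 1) - 1).
Proof.
move=> hn hm.
have d0 : (0 < d)%N by lia.
have hn' : n = (2 + 2 * m.-1)%N by lia.
apply: (nonsurj_gen (b := 2) (k := m.-1) (Gb := fp d (var 0) (var 1)) (Mb := (um n 0 *+ d.-1)%MM) d0 hn').
- apply: pp_gens => [c hc|]; first by apply: Dnull_mulr; apply: Dnull_var.
  rewrite mulrA; apply: Dnull_mulr; rewrite /fp mulr_sumr; apply: Dnull_sum => k _.
  rewrite exprNn.
  have -> : var 0 ^+ 3 * var 1 ^+ (d - 3) * (var 0 ^+ (d.-1 - k) * ((-1) ^+ k * var 1 ^+ k)) =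
     (-1) ^+ k * (var 0 ^+ (3 + (d.-1 - k)) * var 1 ^+ (d - 3 + k)) by rewrite !exprD; ring.
  apply: Dnull_mull; apply: (Q_mono2 (Q := Dnull d)) => //; try lia.
  + by move=> h p; apply: Dnull_mull.
  + by move=> c hc; apply: Dnull_var.
  + have := ltn_ord k; lia.
- rewrite Lb2 fpE; apply: DnullB; first by apply: Dnull_var => //; lia.
  by rewrite exprNn; apply: Dnull_mull; apply: Dnull_var => //; lia.
- by rewrite psi_fp !psi_var //; lia.
- by move=> i hi; rewrite mulmnE umE; case: eqP => // e; rewrite e in hi.
- by apply/forallP => i; rewrite mulmnE umE; case: eqP => _; lia.
- rewrite -(psi_coef (Z := pred1 1%N)); last by move=> i /eqP e; rewrite mulmnE umE e.
  rewrite psi_fp !psi_var //=; try lia. rewrite fp0 // varE; last lia.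
  by rewrite mpolyXn mcoeffX eqxx oner_neq0.
- rewrite mdegMn mdeg_um; last lia.
  rewrite hn; have -> : d.-1 = (d - 1)%N by lia.
  set e := (d - 1)%N; have e0 : (0 < e)%N by lia.
  rewrite mul1n; nia.
Qed.

Lemma c1_term a k : (2 < n)%N ->
  var 2 * (var 1 ^+ a * (- var 2) ^+ k) = (-1) ^+ k * 'X_[um n 1 *+ a + um n 2 *+ k.+1].
Proof.
move=> h; rewrite mpolyXD -!mpolyXn -!varE //; last lia.
rewrite [(- var 2) ^+ k]exprNn exprS; ring.
Qed.

Lemma c1_noninj m : n = (2 * m)%N -> (2 <= m)%N -> ~ wlp_injective gens1 (m * (d - 1) - 1).
Proof.
move=> hn hm.
have d0 : (0 < d)%N by lia.
have hn' : n = (4 + 2 * (m - 2))%N by lia.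
have -> : (m * (d - 1) - 1 = N + (m - 2) * d.-1)%N.
  have -> : d.-1 = (d - 1)%N by lia.
  set e := (d - 1)%N; have e0 : (4 <= e)%N by lia.
  have -> : N = (2 * e - 1)%N by lia.
  nia.
set LA := var 0 + var 1; set LB := var 2 + var 3.
have h3 : (3 < n)%N by lia.
have hv : forall c, (c < 4)%N -> var c \is 1.-homog by move=> c hc; apply: var_homog; lia.
apply: (noninj_gen (b := 4) (k := m - 2) (a := (var 2 - var 3) * fp N LA LB)
   (Z := fun i => (i == 0)%N || (i == 3)%N || zp 4 i)
   (Mb := (um n 1 *+ d.-1 + um n 2 *+ (d - 2))%MM) d0 hn').
- have hLA : LA \is 1.-homog by apply: rpredD; apply: hv.
  have hLB : LB \is 1.-homog by apply: rpredD; apply: hv.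
  have h23 : var 2 - var 3 \is 1.-homog by apply: rpredB; apply: hv.
  apply: (homog_eq (dhomogM h23 (fp_homog N hLA hLB))); lia.
- rewrite Lb4.
  have -> : (var 0 + var 1 + var 2 + var 3) * ((var 2 - var 3) * fp N LA LB) =
     (var 2 - var 3) * ((LA + LB) * fp N LA LB) by rewrite /LA /LB; ring.
  rewrite fpE mulrBr; apply: in_idealB; first by apply: in_idealM; apply: c1_A.
  by rewrite exprNn mulrCA; apply: in_idealM; apply: c1_B.
- by move=> c hc; apply: pp_var.
- apply: pp_gens => [c hc|]; first by apply: Dnull_psi_var.
  rewrite psi_M psi_Xn psi_var; last lia. rewrite (_ : ((0 == 0)%N || (0 == 3)%N || zp 4 0%N) = true) // expr0n mul0r; exact: Dnull0.
- move=> j hj; have [h1 h2] := zp_pair 4 j; split; first by rewrite h1 !orbT.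
  by rewrite (negbTE h2) orbF; apply/negP => /orP [] /eqP; lia.
- move=> i hi; rewrite mnmDE !mulmnE !umE.
  by do 2 (case: eqP => [e|_]; first by rewrite e in hi).
- apply/forallP => i; rewrite mnmDE !mulmnE !umE.
  by case: eqP => [->|_]; case: eqP => //= _; lia.
- rewrite /LA /LB psi_M psi_B psi_fp !psi_D !psi_var //=; try lia.
  rewrite subr0 add0r addr0 /fp mulr_sumr raddf_sum /=.
  have hk0 : (d - 3 < N)%N by lia.
  rewrite (bigD1 (Ordinal hk0)) //= big1 ?addr0; last first.
    move=> k hk.
    rewrite c1_term; last lia.
    rewrite mcoeff_signX -mcoeffX mcoeff_X2 //; try lia.
    have -> : (k.+1 == d - 2)%N = false.
      apply/negP => /eqP e; move/negP: hk; apply; apply/eqP/val_inj => /=; lia.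
    by rewrite andbF mulr0.
  rewrite c1_term; last lia.
  rewrite mcoeff_signX -mcoeffX mcoeff_X2 //; try lia.
  have -> : (N.-1 - (d - 3) == d.-1)%N by apply/eqP; lia.
  have -> : ((d - 3).+1 == d - 2)%N by apply/eqP; lia.
  by rewrite mulr1 signr_eq0.
Qed.

End Case1.

End Common.


Section PolyLists.
Context (K : fieldType) (n : nat).
Local Notation P := {mpoly K[n]}.
Local Notation var := (var K n).
Local Notation psi Z := (comp_mpoly (zt K n Z)).
Implicit Types (gens : seq P) (p q h e : P).

Fixpoint monoP (s : seq nat) (i : nat) : P :=
  if s is x :: s' then var i ^+ x * monoP s' i.+1 else 1.
Fixpoint mmf (s : seq nat) (i : nat) : 'X_{1..n} :=
  if s is x :: s' then (um n i *+ x + mmf s' i.+1)%MM else 0%MM.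
Definition mono (t : int * seq nat) : P := t.1%:~R * monoP t.2 0.
Fixpoint PL (L : seq (int * seq nat)) : P :=
  if L is t :: L' then mono t + PL L' else 0.
Fixpoint coefL (L : seq (int * seq nat)) (f : seq nat) : int :=
  if L is t :: L' then ((if t.2 == f then t.1 else 0) + coefL L' f)%R else 0%R.

Lemma monoPE s i : (i + size s <= n)%N -> monoP s i = 'X_[mmf s i].
Proof.
elim: s i => [|x s IH] i /=; first by rewrite mpolyX0.
move=> h; rewrite IH; last lia.
by rewrite mpolyXD -mpolyXn -varE //; lia.
Qed.

Lemma mmfE s i (j : 'I_n) : mmf s i j = if (i <= j)%N then nth 0%N s (j - i) else 0%N.
Proof.
elim: s i => [|x s IH] i /=; first by rewrite mnm0E; case: ifP => //; rewrite nth_nil.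
rewrite mnmDE mulmnE umE IH.
case: (ltngtP i j) => h //=.
- have -> : (j - i = (j - i.+1).+1)%N by lia.
  by rewrite mul0n add0n.
- by rewrite -h subnn /= mul1n addn0.
Qed.

Lemma mmf_eq s f : size s = size f -> (size f <= n)%N -> (mmf s 0 == mmf f 0) = (s == f).
Proof.
move=> hs hf; apply/eqP/eqP => [e|-> //].
apply: (@eq_from_nth _ 0%N) => // j hj.
have hjn : (j < n)%N by lia.
have := congr1 (fun m : 'X_{1..n} => m (Ordinal hjn)) e.
by rewrite /= !mmfE /= !subn0.
Qed.

Lemma mdeg_mmf s i : (i + size s <= n)%N -> mdeg (mmf s i) = sumn s.
Proof.
elim: s i => [|x s IH] i /=; first by rewrite mdeg0.
move=> h; rewrite mdegD mdegMn mdeg_um ?IH ?mul1n //; lia.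
Qed.

Lemma monoE t : (size t.2 <= n)%N -> mono t = (t.1%:~R : K) *: 'X_[mmf t.2 0].
Proof. by move=> h; rewrite /mono monoPE // mulrzl scaler_int. Qed.

Lemma mcoeff_mono t f : (size f <= n)%N -> size t.2 = size f ->
  (mono t)@_(mmf f 0) = (if t.2 == f then t.1 else 0)%:~R.
Proof.
move=> hf hs; rewrite monoE ?hs // mcoeffZ mcoeffX mmf_eq //.
by case: eqP => _; rewrite ?mulr1 ?mulr0.
Qed.

Lemma mcoeff_PL L f : (size f <= n)%N -> all (fun t => size t.2 == size f) L ->
  (PL L)@_(mmf f 0) = (coefL L f)%:~R.
Proof.
move=> hf; elim: L => [|t L IH] /=; first by rewrite mcoeff0.
move=> /andP [/eqP ht hL]; by rewrite mcoeffD mcoeff_mono // IH // rmorphD.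
Qed.

Lemma homog_PL L s w : (w <= n)%N -> all (fun t => (size t.2 == w) && (sumn t.2 == s)) L ->
  PL L \is s.-homog.
Proof.
move=> hw; elim: L => [|t L IH] /=; first by move=> _; exact: dhomog0.
move=> /andP [/andP [/eqP h1 /eqP h2] hL]; apply: rpredD; last exact: IH.
rewrite monoE; last by rewrite h1.
apply: dhomogZ; rewrite dhomogX; apply/eqP.
by change (mdeg (mmf t.2 0) = s); rewrite mdeg_mmf // h1.
Qed.

Lemma Dn_mmf d s : (0 < d)%N -> all (fun x => x < d)%N s -> Dn d (mmf s 0).
Proof.
move=> d0 hs; apply/forallP => j; rewrite mmfE /= subn0.
case: (ltnP j (size s)) => h; first by apply: (allP hs); apply: mem_nth.
by rewrite nth_default.
Qed.

Lemma mmf_high s b (j : 'I_n) : (size s <= b)%N -> (b <= j)%N -> mmf s 0 j = 0%N.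
Proof. by move=> h1 h2; rewrite mmfE /= subn0 nth_default //; lia. Qed.

Lemma mmf_zero s (j : 'I_n) : nth 0%N s j = 0%N -> mmf s 0 j = 0%N.
Proof. by move=> h; rewrite mmfE /= subn0. Qed.

End PolyLists.


Definition La2 : seq (int * seq nat) := [:: (3%:Z, [:: 0; 0; 2; 3]); (- 3%:Z, [:: 0; 0; 3; 2]); (- 4%:Z, [:: 0; 1; 1; 3]); (1%:Z, [:: 0; 1; 2; 2]); (2%:Z, [:: 0; 1; 3; 1]); (3%:Z, [:: 0; 2; 0; 3]); (1%:Z, [:: 0; 2; 1; 2]); (- 2%:Z, [:: 0; 2; 2; 1]); (- 3%:Z, [:: 0; 3; 0; 2]); (2%:Z, [:: 0; 3; 1; 1]); (- 4%:Z, [:: 1; 0; 1; 3]); (1%:Z, [:: 1; 0; 2; 2]); (2%:Z, [:: 1; 0; 3; 1]); (- 4%:Z, [:: 1; 1; 0; 3]); (1%:Z, [:: 1; 2; 0; 2]); (2%:Z, [:: 1; 3; 0; 1]); (3%:Z, [:: 2; 0; 0; 3]); (1%:Z, [:: 2; 0; 1; 2]); (- 2%:Z, [:: 2; 0; 2; 1]); (1%:Z, [:: 2; 1; 0; 2]); (- 2%:Z, [:: 2; 2; 0; 1]); (- 3%:Z, [:: 3; 0; 0; 2]); (2%:Z, [:: 3; 0; 1; 1]); (2%:Z, [:: 3; 1; 0; 1])].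
Definition LV4 : seq (int * seq nat) := [:: (1%:Z, [:: 0; 1; 2; 3]); (- 1%:Z, [:: 0; 1; 3; 2]); (- 1%:Z, [:: 0; 2; 1; 3]); (1%:Z, [:: 0; 2; 3; 1]); (1%:Z, [:: 0; 3; 1; 2]); (- 1%:Z, [:: 0; 3; 2; 1]); (- 1%:Z, [:: 1; 0; 2; 3]); (1%:Z, [:: 1; 0; 3; 2]); (1%:Z, [:: 1; 2; 0; 3]); (- 1%:Z, [:: 1; 2; 3; 0]); (- 1%:Z, [:: 1; 3; 0; 2]); (1%:Z, [:: 1; 3; 2; 0]); (1%:Z, [:: 2; 0; 1; 3]); (- 1%:Z, [:: 2; 0; 3; 1]); (- 1%:Z, [:: 2; 1; 0; 3]); (1%:Z, [:: 2; 1; 3; 0]); (1%:Z, [:: 2; 3; 0; 1]); (- 1%:Z, [:: 2; 3; 1; 0]); (- 1%:Z, [:: 3; 0; 1; 2]); (1%:Z, [:: 3; 0; 2; 1]); (1%:Z, [:: 3; 1; 0; 2]); (- 1%:Z, [:: 3; 1; 2; 0]); (- 1%:Z, [:: 3; 2; 0; 1]); (1%:Z, [:: 3; 2; 1; 0])].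

Section Case2.
Context (K : fieldType) (n : nat).
Local Notation P := {mpoly K[n]}.
Local Notation var := (var K n).
Local Notation psi Z := (comp_mpoly (zt K n Z)).
Local Notation ex2 := (var 0 * var 1 * var 2 * var 3).
Local Notation gens2 := (powers_plus 4 ex2).
Local Notation V4 := ((var 0 - var 1) * (var 0 - var 2) * (var 0 - var 3) * (var 1 - var 2) * (var 1 - var 3) * (var 2 - var 3)).

Lemma c2_ida : Lb K n 4 * PL K n La2 = ((- (3%:R * (var 3 ^+ 2))) + (2%:R * (var 2 * var 3)) + (2%:R * (var 1 * var 3))) * var 0 ^+ 4 + ((- (3%:R * (var 3 ^+ 2))) + (2%:R * (var 2 * var 3)) + (2%:R * (var 0 * var 3))) * var 1 ^+ 4 + ((- (3%:R * (var 3 ^+ 2))) + (2%:R * (var 1 * var 3)) + (2%:R * (var 0 * var 3))) * var 2 ^+ 4 + ((3%:R * (var 2 ^+ 2)) + (- (4%:R * (var 1 * var 2))) + (3%:R * (var 1 ^+ 2)) + (- (4%:R * (var 0 * var 2))) + (- (4%:R * (var 0 * var 1))) + (3%:R * (var 0 ^+ 2))) * var 3 ^+ 4 + ((- (12%:R * (var 3 ^+ 2))) + (2%:R * (var 2 * var 3)) + (4%:R * (var 2 ^+ 2)) + (2%:R * (var 1 * var 3)) + (- (2%:R * (var 1 * var 2))) + (4%:R * (var 1 ^+ 2)) + (2%:R * (var 0 * var 3)) + (- (2%:R * (var 0 * var 2))) + (- (2%:R * (var 0 * var 1))) + (4%:R * (var 0 ^+ 2))) * (var 0 * var 1 * var 2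 * var 3).
Proof. rewrite Lb4 /La2 /PL /mono /monoP /=. ring. Qed.

Lemma c2_idv : Lb K n 4 * V4 = ((- (var 2 * var 3 ^+ 2)) + (var 2 ^+ 2 * var 3) + (var 1 * var 3 ^+ 2) + (- (var 1 * var 2 ^+ 2)) + (- (var 1 ^+ 2 * var 3)) + (var 1 ^+ 2 * var 2)) * var 0 ^+ 4 + ((var 2 * var 3 ^+ 2) + (- (var 2 ^+ 2 * var 3)) + (- (var 0 * var 3 ^+ 2)) + (var 0 * var 2 ^+ 2) + (var 0 ^+ 2 * var 3) + (- (var 0 ^+ 2 * var 2))) * var 1 ^+ 4 + ((- (var 1 * var 3 ^+ 2)) + (var 1 ^+ 2 * var 3) + (var 0 * var 3 ^+ 2) + (- (var 0 * var 1 ^+ 2)) + (- (var 0 ^+ 2 * var 3)) + (var 0 ^+ 2 * var 1)) * var 2 ^+ 4 + ((var 1 * var 2 ^+ 2) + (- (var 1 ^+ 2 * var 2)) + (- (var 0 * var 2 ^+ 2)) + (var 0 * var 1 ^+ 2) + (var 0 ^+ 2 * var 2) + (- (var 0 ^+ 2 * var 1))) * var 3 ^+ 4.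
Proof. rewrite Lb4. ring. Qed.

Lemma c2_ide : ex2 * V4 = ((- (var 1 * var 2 ^+ 2 * var 3 ^+ 3)) + (var 1 * var 2 ^+ 3 * var 3 ^+ 2) + (var 1 ^+ 2 * var 2 * var 3 ^+ 3) + (- (var 1 ^+ 2 * var 2 ^+ 3 * var 3)) + (- (var 1 ^+ 3 * var 2 * var 3 ^+ 2)) + (var 1 ^+ 3 * var 2 ^+ 2 * var 3)) * var 0 ^+ 4 + ((var 0 * var 2 ^+ 2 * var 3 ^+ 3) + (- (var 0 * var 2 ^+ 3 * var 3 ^+ 2)) + (- (var 0 ^+ 2 * var 2 * var 3 ^+ 3)) + (var 0 ^+ 2 * var 2 ^+ 3 * var 3) + (var 0 ^+ 3 * var 2 * var 3 ^+ 2) + (- (var 0 ^+ 3 * var 2 ^+ 2 * var 3))) * var 1 ^+ 4 + ((- (var 0 * var 1 ^+ 2 * var 3 ^+ 3)) + (var 0 * var 1 ^+ 3 * var 3 ^+ 2) + (var 0 ^+ 2 * var 1 * var 3 ^+ 3) + (- (var 0 ^+ 2 * var 1 ^+ 3 * var 3)) + (- (var 0 ^+ 3 * var 1 * var 3 ^+ 2)) + (var 0 ^+ 3 * var 1 ^+ 2 * var 3)) * var 2 ^+ 4 + ((var 0 * var 1 ^+ 2 * var 2 ^+ 3) + (- (var 0 * var 1 ^+ 3 * var 2 ^+ 2)) + (- (var 0 ^+ 2 * var 1 * var 2 ^+ 3)) + (var 0 ^+ 2 * var 1 ^+ 3 * var 2) + (var 0 ^+ 3 * var 1 * var 2 ^+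 2) + (- (var 0 ^+ 3 * var 1 ^+ 2 * var 2))) * var 3 ^+ 4.
Proof. ring. Qed.

Lemma c2_V4 : V4 = PL K n LV4.
Proof. rewrite /LV4 /PL /mono /monoP /=. ring. Qed.

Lemma c2_noninj m : n = (2 * m)%N -> (2 <= m)%N -> ~ wlp_injective gens2 (m * (4 - 1) - 1).
Proof.
move=> hn hm.
have hn' : n = (4 + 2 * (m - 2))%N by lia.
have -> : (m * (4 - 1) - 1 = 5 + (m - 2) * (4.-1))%N by lia.
have h4 : (4 <= n)%N by lia.
apply: (noninj_gen (b := 4) (k := m - 2) (a := PL K n La2)
   (Z := fun i => (i == 0)%N || zp 4 i) (Mb := mmf n [:: 0; 1; 2; 2]%N 0) (isT : (0 < 4)%N) hn').
- by apply: (homog_PL _ h4).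
- rewrite c2_ida.
  have Qv : forall c, (c < n)%N -> in_ideal gens2 (var c ^+ 4) by move=> c hc; apply: pp_var.
  repeat apply: in_idealD; try (apply: in_idealM; apply: Qv; lia).
  by apply: in_idealM; apply: pp_extra.
- by move=> c hc; apply: pp_var.
- apply: pp_gens => [c hc|]; first by apply: Dnull_psi_var.
  rewrite !psi_M psi_var; last lia.
  rewrite (_ : ((0 == 0)%N || zp 4 0%N) = true) // !mul0r; exact: Dnull0.
- move=> j hj; have [h1 h2] := zp_pair 4 j; split; first by rewrite h1 !orbT.
  by rewrite (negbTE h2) orbF; apply/negP => /eqP; lia.
- by move=> i hi; apply: (mmf_high (b := 4)).
- by apply: Dn_mmf.
- rewrite psi_coef; last first.
    move=> i /orP [/eqP e|]; first by apply: mmf_zero; rewrite e.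
    by move=> /andP [hi _]; apply: (mmf_high (b := 4)).
  by rewrite mcoeff_PL //= oner_neq0.
Qed.

Lemma c2_nonsurj m : n = (2 * m)%N -> (2 <= m)%N -> ~ wlp_surjective gens2 (m * (4 - 1) - 1).
Proof.
move=> hn hm.
have hn' : n = (4 + 2 * (m - 2))%N by lia.
have h4 : (4 <= n)%N by lia.
have Dv : forall c, (c < n)%N -> Dnull 4 (var c ^+ 4) by move=> c hc; apply: Dnull_var.
apply: (nonsurj_gen (b := 4) (k := m - 2) (Gb := V4) (Mb := mmf n [:: 0; 1; 2; 3]%N 0) (isT : (0 < 4)%N) hn').
- apply: pp_gens => [c hc|]; first by apply: Dnull_mulr; apply: Dv.
  rewrite mulrA; apply: Dnull_mulr; rewrite c2_ide.
  by repeat apply: DnullD; apply: Dnull_mull; apply: Dv; lia.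
- rewrite c2_idv.
  by repeat apply: DnullD; apply: Dnull_mull; apply: Dv; lia.
- by rewrite !psi_M !psi_B !psi_var //; lia.
- by move=> i hi; apply: (mmf_high (b := 4)).
- by apply: Dn_mmf.
- by rewrite c2_V4 mcoeff_PL //= oner_neq0.
- rewrite mdeg_mmf //=; lia.
Qed.

End Case2.


Definition La3 : seq (int * seq nat) := [:: (1%:Z, [:: 0; 0; 2; 0; 1; 2]); (- 1%:Z, [:: 0; 0; 2; 0; 2; 1]); (- 1%:Z, [:: 0; 0; 2; 1; 0; 2]); (1%:Z, [:: 0; 0; 2; 1; 2; 0]); (1%:Z, [:: 0; 0; 2; 2; 0; 1]); (- 1%:Z, [:: 0; 0; 2; 2; 1; 0]); (- 1%:Z, [:: 0; 1; 1; 0; 1; 2]); (1%:Z, [:: 0; 1; 1; 0; 2; 1]); (1%:Z, [:: 0; 1; 1; 1; 0; 2]); (- 1%:Z, [:: 0; 1; 1; 1; 2; 0]); (- 1%:Z, [:: 0; 1; 1; 2; 0; 1]); (1%:Z, [:: 0; 1; 1; 2; 1; 0]); (1%:Z, [:: 0; 2; 0; 0; 1; 2]); (- 1%:Z, [:: 0; 2; 0; 0; 2; 1]); (- 1%:Z, [:: 0; 2; 0; 1; 0; 2]); (1%:Z, [:: 0; 2; 0; 1; 2; 0]); (1%:Z, [:: 0; 2; 0; 2; 0; 1]); (- 1%:Z, [:: 0; 2; 0; 2; 1; 0]); (- 1%:Z, [:: 1; 0; 1; 0; 1; 2]); (1%:Z, [:: 1; 0; 1; 0; 2; 1]); (1%:Z,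 [:: 1; 0; 1; 1; 0; 2]); (- 1%:Z, [:: 1; 0; 1; 1; 2; 0]); (- 1%:Z, [:: 1; 0; 1; 2; 0; 1]); (1%:Z, [:: 1; 0; 1; 2; 1; 0]); (- 1%:Z, [:: 1; 1; 0; 0; 1; 2]); (1%:Z, [:: 1; 1; 0; 0; 2; 1]); (1%:Z, [:: 1; 1; 0; 1; 0; 2]); (- 1%:Z, [:: 1; 1; 0; 1; 2; 0]); (- 1%:Z, [:: 1; 1; 0; 2; 0; 1]); (1%:Z, [:: 1; 1; 0; 2; 1; 0]); (1%:Z, [:: 2; 0; 0; 0; 1; 2]); (- 1%:Z, [:: 2; 0; 0; 0; 2; 1]); (- 1%:Z, [:: 2; 0; 0; 1; 0; 2]); (1%:Z, [:: 2; 0; 0; 1; 2; 0]); (1%:Z, [:: 2; 0; 0; 2; 0; 1]); (- 1%:Z, [:: 2; 0; 0; 2; 1; 0])].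
Definition LG3 : seq (int * seq nat) := [:: (1%:Z, [:: 0; 1; 2; 0; 1; 2]); (- 1%:Z, [:: 0; 1; 2; 0; 2; 1]); (- 1%:Z, [:: 0; 1; 2; 1; 0; 2]); (1%:Z, [:: 0; 1; 2; 1; 2; 0]); (1%:Z, [:: 0; 1; 2; 2; 0; 1]); (- 1%:Z, [:: 0; 1; 2; 2; 1; 0]); (- 1%:Z, [:: 0; 2; 1; 0; 1; 2]); (1%:Z, [:: 0; 2; 1; 0; 2; 1]); (1%:Z, [:: 0; 2; 1; 1; 0; 2]); (- 1%:Z, [:: 0; 2; 1; 1; 2; 0]); (- 1%:Z, [:: 0; 2; 1; 2; 0; 1]); (1%:Z, [:: 0; 2; 1; 2; 1; 0]); (- 1%:Z, [:: 1; 0; 2; 0; 1; 2]); (1%:Z, [:: 1; 0; 2; 0; 2; 1]); (1%:Z, [:: 1; 0; 2; 1; 0; 2]); (- 1%:Z, [:: 1; 0; 2; 1; 2; 0]); (- 1%:Z, [:: 1; 0; 2; 2; 0; 1]); (1%:Z, [:: 1; 0; 2; 2; 1; 0]); (1%:Z, [:: 1; 2; 0; 0; 1; 2]); (- 1%:Z, [:: 1; 2; 0; 0; 2; 1]); (- 1%:Z, [:: 1; 2; 0; 1; 0; 2]); (1%:Z, [:: 1; 2; 0; 1; 2; 0]); (1%:Z, [:: 1; 2; 0; 2; 0; 1]); (- 1%:Z, [:: 1; 2; 0; 2; 1; 0]); (1%:Z, [:: 2; 0; 1; 0; 1; 2]); (- 1%:Z, [:: 2; 0; 1; 0; 2; 1]);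 (- 1%:Z, [:: 2; 0; 1; 1; 0; 2]); (1%:Z, [:: 2; 0; 1; 1; 2; 0]); (1%:Z, [:: 2; 0; 1; 2; 0; 1]); (- 1%:Z, [:: 2; 0; 1; 2; 1; 0]); (- 1%:Z, [:: 2; 1; 0; 0; 1; 2]); (1%:Z, [:: 2; 1; 0; 0; 2; 1]); (1%:Z, [:: 2; 1; 0; 1; 0; 2]); (- 1%:Z, [:: 2; 1; 0; 1; 2; 0]); (- 1%:Z, [:: 2; 1; 0; 2; 0; 1]); (1%:Z, [:: 2; 1; 0; 2; 1; 0])].

Section Case3.
Context (K : fieldType) (n : nat).
Local Notation P := {mpoly K[n]}.
Local Notation var := (var K n).
Local Notation psi Z := (comp_mpoly (zt K n Z)).
Local Notation ex3 := (var 0 * var 1 * var 2).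
Local Notation gens3 := (powers_plus 3 ex3).
Local Notation VA := ((var 0 - var 1) * (var 0 - var 2) * (var 1 - var 2)).
Local Notation VB := ((var 3 - var 4) * (var 3 - var 5) * (var 4 - var 5)).

Lemma c3_a : PL K n La3 = (var 0 * var 1 + var 0 * var 2 + var 1 * var 2 - var 0 ^+ 2 - var 1 ^+ 2 - var 2 ^+ 2) * VB.
Proof. rewrite /La3 /PL /mono /monoP /=. ring. Qed.

Lemma c3_ida : Lb K n 6 * PL K n La3 = ((var 4 * var 5 ^+ 2) + (- (var 4 ^+ 2 * var 5)) + (- (var 3 * var 5 ^+ 2)) + (var 3 * var 4 ^+ 2) + (var 3 ^+ 2 * var 5) + (- (var 3 ^+ 2 * var 4))) * var 0 ^+ 3 + ((var 4 * var 5 ^+ 2) + (- (var 4 ^+ 2 * var 5)) + (- (var 3 * var 5 ^+ 2)) + (var 3 * var 4 ^+ 2) + (var 3 ^+ 2 * var 5) + (- (var 3 ^+ 2 * var 4))) * var 1 ^+ 3 + ((var 4 * var 5 ^+ 2) + (- (var 4 ^+ 2 * var 5)) + (- (var 3 * var 5 ^+ 2)) + (var 3 * var 4 ^+ 2) + (var 3 ^+ 2 * var 5) + (- (var 3 ^+ 2 * var 4))) * var 2 ^+ 3 + ((var 2 ^+ 2 * var 5) + (- (var 2 ^+ 2 * var 4)) + (- (var 1 * var 2 * var 5)) + (var 1 * var 2 * var 4) + (var 1 ^+ 2 * var 5) + (- (var 1 ^+ 2 * var 4)) + (- (var 0 * var 2 * var 5)) + (var 0 * var 2 * var 4) + (-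 (var 0 * var 1 * var 5)) + (var 0 * var 1 * var 4) + (var 0 ^+ 2 * var 5) + (- (var 0 ^+ 2 * var 4))) * var 3 ^+ 3 + ((- (var 2 ^+ 2 * var 5)) + (var 2 ^+ 2 * var 3) + (var 1 * var 2 * var 5) + (- (var 1 * var 2 * var 3)) + (- (var 1 ^+ 2 * var 5)) + (var 1 ^+ 2 * var 3) + (var 0 * var 2 * var 5) + (- (var 0 * var 2 * var 3)) + (var 0 * var 1 * var 5) + (- (var 0 * var 1 * var 3)) + (- (var 0 ^+ 2 * var 5)) + (var 0 ^+ 2 * var 3)) * var 4 ^+ 3 + ((var 2 ^+ 2 * var 4) + (- (var 2 ^+ 2 * var 3)) + (- (var 1 * var 2 * var 4)) + (var 1 * var 2 * var 3) + (var 1 ^+ 2 * var 4) + (- (var 1 ^+ 2 * var 3)) + (- (var 0 * var 2 * var 4)) + (var 0 * var 2 * var 3) + (- (var 0 * var 1 * var 4)) + (var 0 * var 1 * var 3) + (var 0 ^+ 2 * var 4) + (- (var 0 ^+ 2 * var 3))) * var 5 ^+ 3 + ((- (3%:R * (var 4 * var 5 ^+ 2))) + (3%:R * (var 4 ^+ 2 * var 5)) + (3%:R * (var 3 * var 5 ^+ 2)) + (- (3%:R * (var 3 * var 4 ^+ 2))) + (- (3%:R * (var 3 ^+ 2 * var 5))) + (3%:R * (var 3 ^+ 2 * var 4))) * (var 0 * var 1 * var 2).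
Proof. rewrite c3_a Lb6. ring. Qed.

Lemma c3_idg : Lb K n 6 * (VA * VB) = ((var 2 * var 4 * var 5 ^+ 2) + (- (var 2 * var 4 ^+ 2 * var 5)) + (- (var 2 * var 3 * var 5 ^+ 2)) + (var 2 * var 3 * var 4 ^+ 2) + (var 2 * var 3 ^+ 2 * var 5) + (- (var 2 * var 3 ^+ 2 * var 4)) + (- (var 1 * var 4 * var 5 ^+ 2)) + (var 1 * var 4 ^+ 2 * var 5) + (var 1 * var 3 * var 5 ^+ 2) + (- (var 1 * var 3 * var 4 ^+ 2)) + (- (var 1 * var 3 ^+ 2 * var 5)) + (var 1 * var 3 ^+ 2 * var 4)) * var 0 ^+ 3 + ((- (var 2 * var 4 * var 5 ^+ 2)) + (var 2 * var 4 ^+ 2 * var 5) + (var 2 * var 3 * var 5 ^+ 2) + (- (var 2 * var 3 * var 4 ^+ 2)) + (- (var 2 * var 3 ^+ 2 * var 5)) + (var 2 * var 3 ^+ 2 * var 4) + (var 0 * var 4 * var 5 ^+ 2) + (- (var 0 * var 4 ^+ 2 * var 5)) + (- (var 0 * var 3 * var 5 ^+ 2)) + (var 0 * var 3 * var 4 ^+ 2) + (var 0 * var 3 ^+ 2 * var 5) + (- (var 0 * var 3 ^+ 2 * var 4))) * var 1 ^+ 3 + ((var 1 * var 4 * var 5 ^+ 2) + (- (var 1 * var 4 ^+ 2 * var 5)) + (- (var 1 * var 3 * var 5 ^+ 2)) + (var 1 * var 3 * var 4 ^+ 2) + (var 1 * var 3 ^+ 2 * var 5) + (- (var 1 * var 3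 ^+ 2 * var 4)) + (- (var 0 * var 4 * var 5 ^+ 2)) + (var 0 * var 4 ^+ 2 * var 5) + (var 0 * var 3 * var 5 ^+ 2) + (- (var 0 * var 3 * var 4 ^+ 2)) + (- (var 0 * var 3 ^+ 2 * var 5)) + (var 0 * var 3 ^+ 2 * var 4)) * var 2 ^+ 3 + ((var 1 * var 2 ^+ 2 * var 5) + (- (var 1 * var 2 ^+ 2 * var 4)) + (- (var 1 ^+ 2 * var 2 * var 5)) + (var 1 ^+ 2 * var 2 * var 4) + (- (var 0 * var 2 ^+ 2 * var 5)) + (var 0 * var 2 ^+ 2 * var 4) + (var 0 * var 1 ^+ 2 * var 5) + (- (var 0 * var 1 ^+ 2 * var 4)) + (var 0 ^+ 2 * var 2 * var 5) + (- (var 0 ^+ 2 * var 2 * var 4)) + (- (var 0 ^+ 2 * var 1 * var 5)) + (var 0 ^+ 2 * var 1 * var 4)) * var 3 ^+ 3 + ((- (var 1 * var 2 ^+ 2 * var 5)) + (var 1 * var 2 ^+ 2 * var 3) + (var 1 ^+ 2 * var 2 * var 5) + (- (var 1 ^+ 2 * var 2 * var 3)) + (var 0 * var 2 ^+ 2 * var 5) + (- (var 0 * var 2 ^+ 2 * var 3)) + (- (var 0 * var 1 ^+ 2 * var 5)) + (var 0 * var 1 ^+ 2 * var 3) + (- (var 0 ^+ 2 * var 2 * var 5)) + (var 0 ^+ 2 * var 2 * var 3) + (var 0 ^+ 2 * var 1 * var 5) + (- (var 0 ^+ 2 * var 1 * var 3))) * var 4 ^+ 3 + ((var 1 * var 2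 ^+ 2 * var 4) + (- (var 1 * var 2 ^+ 2 * var 3)) + (- (var 1 ^+ 2 * var 2 * var 4)) + (var 1 ^+ 2 * var 2 * var 3) + (- (var 0 * var 2 ^+ 2 * var 4)) + (var 0 * var 2 ^+ 2 * var 3) + (var 0 * var 1 ^+ 2 * var 4) + (- (var 0 * var 1 ^+ 2 * var 3)) + (var 0 ^+ 2 * var 2 * var 4) + (- (var 0 ^+ 2 * var 2 * var 3)) + (- (var 0 ^+ 2 * var 1 * var 4)) + (var 0 ^+ 2 * var 1 * var 3)) * var 5 ^+ 3.
Proof. rewrite Lb6. ring. Qed.

Lemma c3_ide : ex3 * (VA * VB) = ((var 1 * var 2 ^+ 2 * var 4 * var 5 ^+ 2) + (- (var 1 * var 2 ^+ 2 * var 4 ^+ 2 * var 5)) + (- (var 1 * var 2 ^+ 2 * var 3 * var 5 ^+ 2)) + (var 1 * var 2 ^+ 2 * var 3 * var 4 ^+ 2) + (var 1 * var 2 ^+ 2 * var 3 ^+ 2 * var 5) + (- (var 1 * var 2 ^+ 2 * var 3 ^+ 2 * var 4)) + (- (var 1 ^+ 2 * var 2 * var 4 * var 5 ^+ 2)) + (var 1 ^+ 2 * var 2 * var 4 ^+ 2 * var 5) + (var 1 ^+ 2 * var 2 * var 3 * var 5 ^+ 2) + (- (var 1 ^+ 2 * var 2 * var 3 * var 4 ^+ 2)) + (- (var 1 ^+ 2 * var 2 * var 3 ^+ 2 * var 5)) + (var 1 ^+ 2 * var 2 * var 3 ^+ 2 * var 4)) * var 0 ^+ 3 + ((- (var 0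 * var 2 ^+ 2 * var 4 * var 5 ^+ 2)) + (var 0 * var 2 ^+ 2 * var 4 ^+ 2 * var 5) + (var 0 * var 2 ^+ 2 * var 3 * var 5 ^+ 2) + (- (var 0 * var 2 ^+ 2 * var 3 * var 4 ^+ 2)) + (- (var 0 * var 2 ^+ 2 * var 3 ^+ 2 * var 5)) + (var 0 * var 2 ^+ 2 * var 3 ^+ 2 * var 4) + (var 0 ^+ 2 * var 2 * var 4 * var 5 ^+ 2) + (- (var 0 ^+ 2 * var 2 * var 4 ^+ 2 * var 5)) + (- (var 0 ^+ 2 * var 2 * var 3 * var 5 ^+ 2)) + (var 0 ^+ 2 * var 2 * var 3 * var 4 ^+ 2) + (var 0 ^+ 2 * var 2 * var 3 ^+ 2 * var 5) + (- (var 0 ^+ 2 * var 2 * var 3 ^+ 2 * var 4))) * var 1 ^+ 3 + ((var 0 * var 1 ^+ 2 * var 4 * var 5 ^+ 2) + (- (var 0 * var 1 ^+ 2 * var 4 ^+ 2 * var 5)) + (- (var 0 * var 1 ^+ 2 * var 3 * var 5 ^+ 2)) + (var 0 * var 1 ^+ 2 * var 3 * var 4 ^+ 2) + (var 0 * var 1 ^+ 2 * var 3 ^+ 2 * var 5) + (- (var 0 * var 1 ^+ 2 * var 3 ^+ 2 * var 4)) + (- (var 0 ^+ 2 * var 1 * var 4 * var 5 ^+ 2)) + (var 0 ^+ 2 * var 1 * var 4 ^+ 2 * var 5) + (var 0 ^+ 2 * var 1 * var 3 * var 5 ^+ 2) + (- (var 0 ^+ 2 * var 1 * var 3 * var 4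 ^+ 2)) + (- (var 0 ^+ 2 * var 1 * var 3 ^+ 2 * var 5)) + (var 0 ^+ 2 * var 1 * var 3 ^+ 2 * var 4)) * var 2 ^+ 3 + (0) * var 3 ^+ 3 + (0) * var 4 ^+ 3 + (0) * var 5 ^+ 3.
Proof. ring. Qed.

Lemma c3_G : VA * VB = PL K n LG3.
Proof. rewrite /LG3 /PL /mono /monoP /=. ring. Qed.

Lemma c3_noninj m : n = (2 * m)%N -> (3 <= m)%N -> ~ wlp_injective gens3 (m * (3 - 1) - 1).
Proof.
move=> hn hm.
have hn' : n = (6 + 2 * (m - 3))%N by lia.
have -> : (m * (3 - 1) - 1 = 5 + (m - 3) * (3.-1))%N by lia.
have h6 : (6 <= n)%N by lia.
apply: (noninj_gen (b := 6) (k := m - 3) (a := PL K n La3)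
   (Z := fun i => (i == 2)%N || zp 6 i) (Mb := mmf n [:: 1; 1; 0; 2; 1; 0]%N 0) (isT : (0 < 3)%N) hn').
- by apply: (homog_PL _ h6).
- rewrite c3_ida.
  have Qv : forall c, (c < n)%N -> in_ideal gens3 (var c ^+ 3) by move=> c hc; apply: pp_var.
  repeat apply: in_idealD; try (apply: in_idealM; apply: Qv; lia).
  by apply: in_idealM; apply: pp_extra.
- by move=> c hc; apply: pp_var.
- apply: pp_gens => [c hc|]; first by apply: Dnull_psi_var.
  rewrite !psi_M !psi_var; try lia.
  rewrite (_ : ((2 == 2)%N || zp 6 2%N) = true) // ?mul0r ?mulr0; exact: Dnull0.
- move=> j hj; have [h1 h2] := zp_pair 6 j; split; first by rewrite h1 !orbT.
  by rewrite (negbTE h2) orbF; apply/negP => /eqP; lia.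
- by move=> i hi; apply: (mmf_high (b := 6)).
- by apply: Dn_mmf.
- rewrite psi_coef; last first.
    move=> i /orP [/eqP e|]; first by apply: mmf_zero; rewrite e.
    by move=> /andP [hi _]; apply: (mmf_high (b := 6)).
  by rewrite mcoeff_PL //= ?oner_neq0.
Qed.

Lemma c3_nonsurj m : n = (2 * m)%N -> (3 <= m)%N -> ~ wlp_surjective gens3 (m * (3 - 1) - 1).
Proof.
move=> hn hm.
have hn' : n = (6 + 2 * (m - 3))%N by lia.
have h6 : (6 <= n)%N by lia.
have Dv : forall c, (c < n)%N -> Dnull 3 (var c ^+ 3) by move=> c hc; apply: Dnull_var.
apply: (nonsurj_gen (b := 6) (k := m - 3) (Gb := VA * VB) (Mb := mmf n [:: 2; 1; 0; 2; 1; 0]%N 0) (isT : (0 < 3)%N) hn').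
- apply: pp_gens => [c hc|]; first by apply: Dnull_mulr; apply: Dv.
  rewrite mulrA; apply: Dnull_mulr; rewrite c3_ide.
  by repeat apply: DnullD; apply: Dnull_mull; apply: Dv; lia.
- rewrite c3_idg.
  by repeat apply: DnullD; apply: Dnull_mull; apply: Dv; lia.
- by rewrite !psi_M !psi_B !psi_var //; lia.
- by move=> i hi; apply: (mmf_high (b := 6)).
- by apply: Dn_mmf.
- by rewrite c3_G mcoeff_PL //= ?oner_neq0.
- rewrite mdeg_mmf //=; lia.
Qed.

End Case3.

Theorem proposition5p6 (K : fieldType) (hK : [pchar K] =i pred0)
  (m n d : nat) (hn : n = (2 * m)%N) :
  [/\ (5 <= d)%N -> (4 <= n)%N ->
        fails_WLP_in_degree
          (powers_plus d (var K n 0 ^+ 3 * var K n 1 ^+ (d - 3)))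
          (m * (d - 1) - 1)%N,
      d = 4%N -> (4 <= n)%N ->
        fails_WLP_in_degree
          (powers_plus d (var K n 0 * var K n 1 * var K n 2 * var K n 3))
          (m * (d - 1) - 1)%N
    & d = 3%N -> (6 <= n)%N ->
        fails_WLP_in_degree
          (powers_plus d (var K n 0 * var K n 1 * var K n 2))
          (m * (d - 1) - 1)%N].
Proof.
split.
- move=> d5 n4; have m2 : (2 <= m)%N by lia.
  by split; [exact: c1_noninj | exact: c1_nonsurj].
- move=> -> n4; have m2 : (2 <= m)%N by lia.
  by split; [exact: c2_noninj | exact: c2_nonsurj].
- move=> -> n6; have m3 : (3 <= m)%N by lia.
  by split; [exact: c3_noninj | exact: c3_nonsurj].
Qed.
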